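(* Let $a,b,\alpha,\beta$ be complex numbers with $\beta a-\alpha b\neq0$, let $n\ge1$, and write $\Psi_r(m)=\Psi\left(\begin{array}{cc|c} a & b & m \\ \alpha & \beta & r \end{array}\right)$, $\Phi_r(m)=\Phi\left(\begin{array}{cc|c} a & b & m \\ \alpha & \beta & r \end{array}\right)$. Then for $0\le r\le\lfloor (n-1)/2\rfloor$, \[ \Phi_r(n)=\frac{(2\alpha-\beta)\big(\lfloor (n+1)/2\rfloor-r\big)\Psi_r(n+1)+(2a-b)(r+1)\Psi_{r+1}(n+1)}{(\beta a-\alpha b)(n+1)}. \]
   Context: $\delta(m)=1$ for $m$ odd, $0$ for $m$ even; $\lfloor\cdot\rfloor$ is the floor. For $m\ge1$ and numbers with $\beta a-\alpha b\ne0$, $\Psi\left(\begin{array}{cc|c} a & b & m \\ \alpha & \beta & r \end{array}\right)$ ($0\le r\le\lfloor m/2\rfloor$) and $\Phi\left(\begin{array}{cc|c} a & b & m \\ \alpha & \beta & r \end{array}\right)$ ($0\le r\le\lfloor (m-1)/2\rfloor$) are the unique numbers such that, identically in $x,y$, $(\beta a-\alpha b)^{\lfloor m/2\rfloor}\frac{x^m+y^m}{(x+y)^{\delta(m)}}=\sum_{r}\Psi\left(\begin{array}{cc|c} a & b & m \\ \alpha & \beta & r \end{array}\right)(\alpha x^2+\beta xy+\alpha y^2)^{\lfloor m/2\rfloor-r}(ax^2+bxy+ay^2)^r$ and $(\beta a-\alpha b)^{\lfloor (m-1)/2\rfloor}\frac{x^m-y^m}{(x-y)(x+y)^{\delta(m-1)}}=\sum_{r}\Phi\left(\begin{array}{cc|c}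 a & b & m \\ \alpha & \beta & r \end{array}\right)(\alpha x^2+\beta xy+\alpha y^2)^{\lfloor (m-1)/2\rfloor-r}(ax^2+bxy+ay^2)^r$. *)

(* Defs.v *)
From HB Require Import structures.
From mathcomp Require Import all_boot all_order all_algebra.
From mathcomp Require Import complex Rstruct.
Set Implicit Arguments. Unset Strict Implicit. Unset Printing Implicit Defensive.
Import Order.TTheory GRing.Theory Num.Theory.
Local Open Scope ring_scope.

Definition C : Type := (Rdefinitions.R)[i].

Definition delta (m : nat) : nat := odd m.

Definition is_Psi (a b al be : C) (Psi : nat -> nat -> C) : Prop :=
  forall m : nat, (1 <= m)%N -> forall x y : C, (x + y) ^+ delta m != 0 ->
    (be * a - al * b) ^+ (m %/ 2) * ((x ^+ m + y ^+ m) / (x + y) ^+ delta m)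
    = \sum_(r < (m %/ 2).+1)
        Psi m r * (al * x ^+ 2 + be * x * y + al * y ^+ 2) ^+ (m %/ 2 - r)
                * (a * x ^+ 2 + b * x * y + a * y ^+ 2) ^+ r.

Definition is_Phi (a b al be : C) (Phi : nat -> nat -> C) : Prop :=
  forall m : nat, (1 <= m)%N -> forall x y : C,
    (x - y) * (x + y) ^+ delta (m - 1) != 0 ->
    (be * a - al * b) ^+ ((m - 1) %/ 2)
      * ((x ^+ m - y ^+ m) / ((x - y) * (x + y) ^+ delta (m - 1)))
    = \sum_(r < ((m - 1) %/ 2).+1)
        Phi m r * (al * x ^+ 2 + be * x * y + al * y ^+ 2) ^+ ((m - 1) %/ 2 - r)
                * (a * x ^+ 2 + b * x * y + a * y ^+ 2) ^+ r.

(* Main.v *)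
Require Import Defs.
From HB Require Import structures.
From mathcomp Require Import all_boot all_order all_algebra.
From mathcomp Require Import complex Rstruct.
From mathcomp Require Import ring zify.
Set Warnings "-notation-overridden,-ambiguous-paths".

Import Order.TTheory GRing.Theory Num.Theory.
Local Open Scope ring_scope.

Definition T (k : nat) (f : {poly C}) : {poly C} := (1 + 'X) * f^`() - k%:R * f.

Lemma T_add k f g : T k (f + g) = T k f + T k g.
Proof. rewrite /T derivD; ring. Qed.
Lemma T_0 k : T k 0 = 0.
Proof. rewrite /T deriv0; ring. Qed.
Lemma T_sum k I (r : seq I) (P : pred I) (F : I -> {poly C}) :
  T k (\sum_(i <- r | P i) F i) = \sum_(i <- r | P i) T k (F i).
Proof. exact: (big_morph (T k) (T_add k) (T_0 k)). Qed.
Lemma T_C k c f : T k (c%:P * f) = c%:P * T k f.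
Proof. rewrite /T deriv_mulC; ring. Qed.
Lemma T_M k l f g : T (k + l) (f * g) = T k f * g + f * T l g.
Proof. rewrite /T derivM natrD; ring. Qed.
Lemma T_exp k f j : T (k * j) (f ^+ j) = j%:R * f ^+ j.-1 * T k f.
Proof.
elim: j => [|j IH]; first by rewrite muln0 expr0 /T derivC; ring.
rewrite mulnS exprS T_M IH; case: j {IH} => [|j] /=; first by rewrite !expr0; ring.
rewrite [in RHS]mulrSr exprS; ring.
Qed.
Lemma T_X1pow d : (d <= 1)%N -> T d (('X + 1)^+d) = 0.
Proof.
case: d => [|[|//]] _; first by rewrite expr0 /T derivC; ring.
by rewrite expr1 /T derivD derivX derivC; ring.
Qed.
Lemma T_Xn n : T n.+1 ('X^(n.+1) + 1) = n.+1%:R * ('X^n - 1).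
Proof. rewrite /T derivD derivXn derivC /= exprS -mulr_natr; ring. Qed.

Definition pp (a b : C) : {poly C} := a%:P * 'X^2 + b%:P * 'X + a%:P.

Lemma d_pp a b : (pp a b)^`() = 2%:R * a%:P * 'X + b%:P :> {poly C}.
Proof. rewrite /pp !derivD !deriv_mulC derivXn derivX derivC /= expr1; ring. Qed.

Lemma T_pp a b : T 2 (pp a b) = (2 * a - b)%:P * ('X - 1).
Proof.
have -> : (2 * a - b)%:P = 2%:R * a%:P - b%:P :> {poly C}.
  by rewrite polyCB polyCM polyC_natr.
rewrite /T d_pp /pp.
have key : forall (R : comNzRingType) (X A B : R),
  (1+X)*(2%:R*A*X + B) - 2%:R*(A*X^+2 + B*X + A) = (2%:R*A - B)*(X-1).
  by move=> *; ring.
exact: key.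
Qed.

Lemma horner_pp a b x : (pp a b).[x] = a * x^+2 + b * x * 1 + a * 1^+2.
Proof. rewrite /pp !hornerD !hornerM !hornerC hornerX.
by rewrite expr1n !mulr1 expr2. Qed.

Lemma poly_zero_of_roots (E : {poly C}) : (forall i : nat, E.[(i.+2)%:R] = 0) -> E = 0.
Proof.
move=> hE; apply/eqP; apply: contraT => nz.
have := max_poly_roots nz (rs := [seq (i.+2)%:R | i <- iota 0 (size E)]).
rewrite size_map size_iota ltnn; apply.
  by apply/allP => x /mapP [i _ ->]; apply/rootP.
rewrite map_inj_uniq ?iota_uniq // => i j /eqP; rewrite eqr_nat => /eqP [].
by [].
Qed.

Lemma root_pair a b al be : be*a - al*b != 0 ->
  exists x0, (pp al be).[x0] = 0 /\ (pp a b).[x0] != 0.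
Proof.
move=> hD.
have [x0 hx0] : exists x0, (pp al be).[x0] = 0.
  case: (eqVneq al 0) => [al0|al0].
    by exists 0; rewrite horner_pp al0; ring.
  set s := sqrtC (be^+2 - 4 * al^+2).
  have hs : s^+2 = be^+2 - 4*al^+2 by exact: sqrtCK.
  have h2 : (2:C) != 0 by rewrite pnatr_eq0.
  exists ((- be + s) / (2 * al)).
  rewrite horner_pp expr1n !mulr1.
  have -> : al * ((- be + s) / (2 * al))^+2 + be * ((- be + s) / (2 * al)) + al
      = (s^+2 - (be^+2 - 4*al^+2)) / (4 * al).
    by field; rewrite ?mulf_neq0 ?pnatr_eq0.
  by rewrite hs subrr mul0r.
exists x0; split=> //; apply/negP => /eqP hq.
rewrite !horner_pp expr1n !mulr1 in hx0 hq.
have : (be*a - al*b) * x0 = 0.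
  have -> : (be*a - al*b)*x0 = a*(al*x0^+2 + be*x0 + al) - al*(a*x0^+2 + b*x0 + a) by ring.
  by rewrite hx0 hq !mulr0 subrr.
move/eqP; rewrite mulf_eq0 (negbTE hD) /= => /eqP x00.
rewrite x00 in hx0 hq.
have al0 : al = 0 by rewrite -hx0; ring.
have a0 : a = 0 by rewrite -hq; ring.
by move: hD; rewrite al0 a0 mulr0 mul0r subrr eqxx.
Qed.

Lemma uniq_rep a b al be (c : nat -> C) L : be*a - al*b != 0 ->
  \sum_(s < L.+1) (c s)%:P * ((pp al be)^+(L - s) * (pp a b)^+s) = 0 ->
  forall s, (s <= L)%N -> c s = 0.
Proof.
move=> hD; have [x0 [px qx]] := root_pair _ _ _ _ hD.
have ppnz : pp al be != 0.
  apply/negP=> /eqP h0.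
  move: (horner_pp al be 0) (horner_pp al be 1); rewrite h0 !horner0 => h1 h2.
  have al0 : al = 0 by rewrite [RHS]h1; ring.
  have be0 : be = 0 by move: h2; rewrite al0 => ->; ring.
  by move: hD; rewrite al0 be0 !mul0r subrr eqxx.
elim: L => [|L IH] hs s hsL.
  move: hs; rewrite big_ord1 /= !expr0 !mulr1 => /eqP; rewrite polyC_eq0 => /eqP.
  by move: hsL; rewrite leqn0 => /eqP ->.
rewrite big_ord_recr /= subnn expr0 mul1r in hs.
have e : \sum_(i < L.+1) (c i)%:P * ((pp al be)^+(L.+1 - i) * (pp a b)^+i)
    = pp al be * \sum_(i < L.+1) (c i)%:P * ((pp al be)^+(L - i) * (pp a b)^+i).
  rewrite mulr_sumr; apply: eq_bigr => i _.
  by rewrite subSn 1?exprS -1?mulrA 1?mulrCA // -ltnS.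
rewrite e in hs.
have cL : c L.+1 = 0.
  have := congr1 (horner^~ x0) hs.
  rewrite hornerD !hornerM px mul0r add0r hornerC horner0 horner_exp => /eqP.
  by rewrite mulf_eq0 expf_eq0 (negbTE qx) andbF orbF => /eqP.
rewrite cL polyC0 mul0r addr0 in hs.
move/eqP: hs; rewrite mulf_eq0 (negbTE ppnz) /= => /eqP hs.
rewrite leq_eqVlt in hsL; case/orP: hsL => [/eqP -> // | ]; rewrite ltnS; exact: IH.
Qed.

Lemma psi_poly a b al be Psi m : is_Psi a b al be Psi -> (1 <= m)%N ->
  ((be*a - al*b)^+(m%/2))%:P * ('X^m + 1)
  = (\sum_(r < (m%/2).+1) (Psi m r)%:P * ((pp al be)^+(m%/2 - r) * (pp a b)^+r))
    * ('X + 1)^+(delta m).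
Proof.
move=> hP hm; apply/eqP; rewrite -subr_eq0; apply/eqP; apply: poly_zero_of_roots => i.
set x : C := (i.+2)%:R.
have hx1 : (x + 1) ^+ delta m != 0 by rewrite expf_neq0 // /x natr1 pnatr_eq0.
have h := hP m hm x 1 hx1.
rewrite expr1n in h.
rewrite hornerD hornerN !hornerM hornerC horner_sum !horner_exp !hornerD hornerXn hornerX !hornerC.
rewrite (eq_bigr (fun r : 'I_(m%/2).+1 => Psi m r * (al * x ^+ 2 + be * x * 1 + al * 1 ^+ 2) ^+ (m %/ 2 - r) *
       (a * x ^+ 2 + b * x * 1 + a * 1 ^+ 2) ^+ r)); last first.
  by move=> r _; rewrite !hornerM hornerC !horner_exp !horner_pp mulrA.
by rewrite -h -mulrA divfK ?subrr.
Qed.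

Lemma phi_poly a b al be Phi m : is_Phi a b al be Phi -> (1 <= m)%N ->
  ((be*a - al*b)^+((m-1)%/2))%:P * ('X^m - 1)
  = (\sum_(r < ((m-1)%/2).+1) (Phi m r)%:P * ((pp al be)^+((m-1)%/2 - r) * (pp a b)^+r))
    * (('X - 1) * ('X + 1)^+(delta (m-1))).
Proof.
move=> hP hm; apply/eqP; rewrite -subr_eq0; apply/eqP; apply: poly_zero_of_roots => i.
set x : C := (i.+2)%:R.
have hx1 : (x - 1) * (x + 1) ^+ delta (m-1) != 0.
  rewrite mulf_neq0 ?expf_neq0 // /x; first by rewrite -natr1 addrK pnatr_eq0.
  by rewrite natr1 pnatr_eq0.
have h := hP m hm x 1 hx1.
rewrite expr1n in h.
rewrite hornerD hornerN !hornerM hornerC horner_sum !horner_exp hornerD hornerN hornerXn !hornerD hornerX !hornerC.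
rewrite (eq_bigr (fun r : 'I_((m-1)%/2).+1 => Phi m r * (al * x ^+ 2 + be * x * 1 + al * 1 ^+ 2) ^+ ((m-1) %/ 2 - r) *
       (a * x ^+ 2 + b * x * 1 + a * 1 ^+ 2) ^+ r)); last first.
  by move=> r _; rewrite !hornerM hornerC !horner_exp !horner_pp mulrA.
by rewrite hornerN ?hornerC ?horner1 -h -mulrA divfK ?subrr.
Qed.

Lemma T_FF a b al be (Psi' : nat -> C) L :
  T (2 * L.+1) (\sum_(r < L.+2) (Psi' r)%:P * ((pp al be)^+(L.+1 - r) * (pp a b)^+r))
  = ('X - 1) * \sum_(s < L.+1) ((2*al - be) * (L.+1 - s)%:R * Psi' s
        + (2*a - b) * (s+1)%:R * Psi' (s+1)%N)%:P * ((pp al be)^+(L - s) * (pp a b)^+s).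
Proof.
rewrite T_sum.
have step : forall r : 'I_(L.+2),
  T (2*L.+1) ((Psi' r)%:P * (pp al be ^+ (L.+1 - r) * pp a b ^+ r))
  = (Psi' r)%:P * ((L.+1 - r)%:R * pp al be ^+ (L.+1-r).-1 * ((2*al-be)%:P * ('X - 1)) * pp a b ^+ r)
  + (Psi' r)%:P * (pp al be ^+ (L.+1 - r) * (r%:R * pp a b ^+ r.-1 * ((2*a-b)%:P * ('X-1)))).
  move=> r; rewrite T_C.
  have -> : (2 * L.+1 = 2*(L.+1 - r) + 2*r)%N by have := ltn_ord r; lia.
  by rewrite T_M !T_exp !T_pp mulrDr.
rewrite (eq_bigr _ (fun r _ => step r)) {step} big_split /=.
rewrite big_ord_recr /= subnn.
have z0 : forall p : {poly C}, 0%:R * p = 0 by move=> p; rewrite mul0r.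
have z1 : forall p : {poly C}, p * 0 = 0 by move=> p; rewrite mulr0.
have z2 : forall p : {poly C}, p + 0 = p by move=> p; rewrite addr0.
have z3 : forall p : {poly C}, 0 + p = p by move=> p; rewrite add0r.
rewrite !z0 z1 z2.
rewrite [X in _ + X = _]big_ord_recl /= !z0 !z1 z3.
rewrite mulr_sumr -big_split; apply: eq_bigr => i _ /=.
have hb : bump 0 i = i.+1 by [].
have hi : (i <= L)%N by rewrite -ltnS.
rewrite hb add0n subSS (subSn hi) /= addn1.
rewrite !(polyCD, polyCM, polyCB, polyCN, polyC_natr).
ring.
Qed.

Lemma nz_of_horner (p : {poly C}) x : p.[x] != 0 -> p != 0.
Proof. by apply: contraNneq => ->; rewrite horner0. Qed.

Lemma X1_neq0 : ('X + 1 : {poly C}) != 0.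
Proof.
apply: (@nz_of_horner _ 0); rewrite hornerD hornerX hornerC add0r; exact: oner_neq0.
Qed.

Lemma Xm1_neq0 : ('X - 1 : {poly C}) != 0.
Proof.
apply: (@nz_of_horner _ 0); rewrite hornerD hornerN hornerX hornerC add0r oppr_eq0; exact: oner_neq0.
Qed.

Theorem theorem12p1 (a b al be : C) (Psi Phi : nat -> nat -> C) :
  be * a - al * b != 0 ->
  is_Psi a b al be Psi -> is_Phi a b al be Phi ->
  forall n r : nat, (1 <= n)%N -> (r <= (n - 1) %/ 2)%N ->
  Phi n r =
    ((2 * al - be) * ((n + 1) %/ 2 - r)%:R * Psi (n + 1)%N r
     + (2 * a - b) * (r + 1)%:R * Psi (n + 1)%N (r + 1)%N)
    / ((be * a - al * b) * (n + 1)%:R).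
Proof.
move=> hD hP hF n r hn hr.
have eK : ((n+1)%/2 = ((n-1)%/2).+1)%N by lia.
have ed : delta (n+1) = delta (n-1).
  by rewrite /delta; case: n hn {hr eK} => // n' _; rewrite addn1 subn1 /= negbK.
have en : (n+1 = 2*((n-1)%/2).+1 + delta (n+1))%N.
  by rewrite /delta -eK -{1}(odd_double_half (n+1)) -divn2; lia.
have h1 := psi_poly a b al be Psi (n+1) hP (leq_addl n 1).
have h2 := phi_poly a b al be Phi n hF hn.
move: hr h1 h2 en; rewrite eK -ed; set L := ((n-1)%/2)%N; set dd := delta (n+1).
move=> hr h1 h2 en.
set D := be * a - al * b in hD h1 h2 *.
set FF := \sum_(r < L.+2) _ in h1.
set GG := \sum_(r < L.+1) _ in h2.
pose e := fun s : nat => (2*al - be) * (L.+1 - s)%:R * Psi (n+1)%N s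
        + (2*a - b) * (s+1)%:R * Psi (n+1)%N (s+1)%N.
pose HH := \sum_(s < L.+1) (e s)%:P * ((pp al be)^+(L - s) * (pp a b)^+s).
have tx : T (n+1) ('X^(n+1) + 1) = (n+1)%:R * ('X^n - 1) by rewrite addn1 T_Xn.
have tf : T (n+1) (FF * ('X+1)^+dd) = ('X - 1) * HH * ('X+1)^+dd.
  by rewrite en T_M T_X1pow ?leq_b1 // mulr0 addr0 /FF T_FF.
have h3 := congr1 (T (n+1)) h1.
rewrite T_C tx tf in h3.
have h5 : ('X - 1) * HH * ('X+1)^+dd = ('X - 1) * ((D*(n+1)%:R)%:P * GG) * ('X+1)^+dd.
  rewrite -h3 exprS !polyCM polyC_natr.
  have -> : D%:P * (D ^+ L)%:P * ((n + 1)%:R * ('X^n - 1))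
     = D%:P * (n + 1)%:R * ((D ^+ L)%:P * ('X^n - 1)) by ring.
  rewrite h2; ring.
have h6 : HH = (D*(n+1)%:R)%:P * GG.
  apply: (mulfI Xm1_neq0); apply: (mulIf (expf_neq0 _ X1_neq0)); exact: h5.
pose c := fun s : nat => D * (n+1)%:R * Phi n s - e s.
have hc := uniq_rep a b al be c L hD.
have hsum : \sum_(s < L.+1) (c s)%:P * ((pp al be)^+(L - s) * (pp a b)^+s) = 0.
  rewrite /c.
  under eq_bigr => s _ do rewrite polyCB polyCM mulrBl -mulrA.
  by rewrite sumrB -mulr_sumr -/GG -/HH h6 subrr.
have /subr0_eq he := hc hsum r hr.
change (Phi n r = e r / (D * (n + 1)%:R)).
rewrite -he [_ * Phi n r]mulrC mulfK // mulf_neq0 // pnatr_eq0 addn1 //.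
Qed.
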